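(* Let $\mathbf G(\mathbf x_1),\ldots,\mathbf G(\mathbf x_N)$ be real $m\times s$ matrices such that the column space of the $m\times Ns$ matrix $(\mathbf G(\mathbf x_1),\ldots,\mathbf G(\mathbf x_N))$ is all of $\mathbb R^m$. Consider the following procedure (mKYM). Set $\mathcal S\gets\emptyset$ and $\mathbf P\gets\mathbf I_m$. Repeat: (1) choose any $\mathbf v\in\mathcal C(\mathbf P)$ with $\mathbf v\neq\mathbf 0_m$; (2) choose any $i^*\in\mathrm{argmax}_{i\in\{1,\ldots,N\}\setminus\mathcal S}\lVert\mathbf v^T\mathbf G(\mathbf x_i)\rVert^2$ (Euclidean norm); (3) set $\mathcal S\gets\mathcal S\cup\{i^*\}$; (4) if $|\mathcal S|=m$, stop the loop; (5) set $\widetilde{\mathbf G}\gets\mathbf P\mathbf G(\mathbf x_{i^*})$ and $\mathbf P\gets\mathbf P-\widetilde{\mathbf G}\widetilde{\mathbf G}^+$; until $\mathrm{tr}[\mathbf P]<0.5$. Finally output the design $\mathbf w$ that is uniform on $\{\mathbf x_i: i\in\mathcal S\}$, i.e., $w_i=1/|\mathcal S|$ for $i\in\mathcal S$ and $w_i=0$ otherwise. Then, for any choices made in steps (1) and (2), the procedure terminates with a set $\mathcal S$ of size at most $m$, and the output design $\mathbf w$ is nonsingular, i.e., $\mathbf M(\mathbf w)=\sum_{i=1}^N w_i\mathbf G(\mathbf x_i)\mathbf G^T(\mathbf x_i)$ is nonsingular.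
   Context: $\mathcal C(\mathbf A)$ denotes the column space of a matrix $\mathbf A$, and $\mathbf A^+$ its Moore–Penrose pseudoinverse. A design is a vector $\mathbf w\in\mathbb R^N$ with nonnegative components summing to $1$; it is nonsingular if its information matrix $\mathbf M(\mathbf w)$ is nonsingular. *)

(* Defs.v *)
From HB Require Import structures.
From mathcomp Require Import all_boot all_order all_algebra.
From mathcomp Require Import reals.
Set Implicit Arguments. Unset Strict Implicit. Unset Printing Implicit Defensive.
Import Order.TTheory GRing.Theory Num.Theory.
Local Open Scope ring_scope.

Definition is_MP_inverse (R : realType) (m n : nat)
  (A : 'M[R]_(m, n)) (X : 'M[R]_(n, m)) : Prop :=
  [/\ A *m X *m A = A, X *m A *m X = X,
      (A *m X)^T = A *m X & (X *m A)^T = X *m A].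

Definition in_colspace (R : realType) (m n : nat) (A : 'M[R]_(m, n)) (v : 'cV[R]_m)
  : Prop := exists u : 'cV[R]_n, v = A *m u.

Definition sqnorm_row (R : realType) (n : nat) (x : 'rV[R]_n) : R :=
  \sum_(j < n) x 0 j ^+ 2.

Definition Gcat (R : realType) (m s N : nat) (G : 'I_N -> 'M[R]_(m, s)) :=
  \mxrow_(i < N) G i.

Record mkym_state (R : realType) (m N : nat) := MkState {
  st_S : {set 'I_N};
  st_P : 'M[R]_m;
  st_done : bool }.

Definition mkym_init (R : realType) (m N : nat) : mkym_state R m N :=
  MkState set0 1%:M false.

(* one iteration of the repeat-loop, with the choices of steps (1) and (2)
   left arbitrary *)
Definition mkym_step (R : realType) (m s N : nat) (G : 'I_N -> 'M[R]_(m, s))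
  (st st' : mkym_state R m N) : Prop :=
  st_done st = false /\
  exists (v : 'cV[R]_m) (i : 'I_N),
    [/\ in_colspace (st_P st) v, v != 0, i \notin st_S st,
        (forall j, j \notin st_S st ->
            sqnorm_row (v^T *m G j) <= sqnorm_row (v^T *m G i)) &
        let S' := i |: st_S st in
        if #|S'| == m then st' = MkState S' (st_P st) true
        else exists X : 'M[R]_(s, m),
          is_MP_inverse (st_P st *m G i) X /\
          let P' := st_P st - (st_P st *m G i) *m X in
          st' = MkState S' P' (\tr P' < 2^-1)].

Inductive mkym_reachable (R : realType) (m s N : nat) (G : 'I_N -> 'M[R]_(m, s))
  : mkym_state R m N -> Prop :=
| reach_init : mkym_reachable G (mkym_init R m N)
| reach_step st st' : mkym_reachable G st -> mkym_step G st st' ->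
    mkym_reachable G st'.

Definition design_w (R : realType) (N : nat) (S : {set 'I_N}) : 'I_N -> R :=
  fun i => if i \in S then (#|S|%:R)^-1 else 0.

Definition info_mx (R : realType) (m s N : nat) (G : 'I_N -> 'M[R]_(m, s))
  (w : 'I_N -> R) : 'M[R]_m :=
  \sum_(i < N) w i *: (G i *m (G i)^T).

(* Main.v *)
Require Import Defs.
From HB Require Import structures.
From mathcomp Require Import all_boot all_order all_algebra.
From mathcomp Require Import reals.
From mathcomp Require Import lra zify.
Import Order.TTheory GRing.Theory Num.Theory.
Local Open Scope ring_scope.

Lemma zid (V : zmodType) (a p b c : V) : a - (p - c) = b + (a - p - (b - c)).
Proof. by rewrite (addrC b) !opprB -addrA subrK addrA addrAC. Qed.

Section Aux.
Variable R : realType.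

Lemma sqsum_eq0 k n (B : 'M[R]_(k, n)) : B *m B^T = 0 -> B = 0.
Proof.
move=> H; apply/matrixP=> i j; rewrite mxE.
have := congr1 (fun M : 'M[R]_k => M i i) H; rewrite !mxE => /eqP.
under eq_bigr do rewrite mxE.
rewrite psumr_eq0 => [/allP /(_ j) |l _]; last by rewrite -expr2 sqr_ge0.
by rewrite mem_index_enum implyTb -expr2 sqrf_eq0 => /(_ isT) /eqP.
Qed.

Lemma tr_self_ge0 k n (B : 'M[R]_(k, n)) : 0 <= \tr (B *m B^T).
Proof.
rewrite /mxtrace; apply: sumr_ge0 => i _; rewrite mxE; apply: sumr_ge0 => j _.
by rewrite mxE -expr2 sqr_ge0.
Qed.

Lemma tr_self_eq0 k (B : 'M[R]_k) : \tr (B *m B^T) = 0 -> B = 0.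
Proof.
move=> /eqP; rewrite /mxtrace psumr_eq0 => [H|i _]; last first.
  rewrite mxE; apply: sumr_ge0 => j _; by rewrite mxE -expr2 sqr_ge0.
apply/matrixP=> i j; rewrite mxE.
move/allP: H => /(_ i (mem_index_enum _)) /implyP /(_ isT).
rewrite mxE psumr_eq0 => [/allP /(_ j (mem_index_enum _)) /implyP /(_ isT)|l _].
  by rewrite mxE -expr2 sqrf_eq0 => /eqP.
by rewrite mxE -expr2 sqr_ge0.
Qed.

Lemma gram_unit m r (C : 'M[R]_(m, r)) : row_free C^T -> C^T *m C \in unitmx.
Proof.
move=> fC; rewrite -row_free_unit; apply: inj_row_free => v H.
have H1 : (v *m C^T) *m (v *m C^T)^T = 0.
  by rewrite trmx_mul trmxK mulmxA -(mulmxA v) H mul0mx.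
by apply/eqP; rewrite -(mulmx_free_eq0 _ fC); apply/eqP/sqsum_eq0.
Qed.


Lemma colbase_free m n (A : 'M[R]_(m, n)) : row_free (col_base A)^T.
Proof. by rewrite /row_free mxrank_tr; have := col_base_full (n:=n) A; rewrite /row_full. Qed.

Lemma CtC_unit m n (A : 'M[R]_(m, n)) : (col_base A)^T *m col_base A \in unitmx.
Proof. exact/gram_unit/colbase_free. Qed.

Lemma FFt_unit m n (A : 'M[R]_(m, n)) : row_base A *m (row_base A)^T \in unitmx.
Proof.
by rewrite -{1}(trmxK (row_base A)); apply: gram_unit; rewrite trmxK row_base_free.
Qed.

Lemma cancel_CF m r n (C : 'M[R]_(m, r)) (F : 'M[R]_(r, n)) X :
  C^T *m C \in unitmx -> F *m F^T \in unitmx ->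
  C *m F *m X *m (C *m F) = C *m F -> F *m X *m C = 1%:M.
Proof.
move=> uC uF H.
have H1 : F *m X *m C *m F = F.
  have := congr1 (mulmx (invmx (C^T *m C) *m C^T)) H.
  rewrite !mulmxA -(mulmxA _ C^T C) mulVmx // mul1mx.
  by [].
have := congr1 (mulmx^~ (F^T *m invmx (F *m F^T))) H1.
by rewrite -!mulmxA (mulmxA F F^T) mulmxV // mulmx1 mulmxA.
Qed.

Lemma tr_AX m n (A : 'M[R]_(m, n)) X : A *m X *m A = A -> \tr (A *m X) = (\rank A)%:R.
Proof.
have uC := CtC_unit _ _ A; have uF := FFt_unit _ _ A.
move: uC uF; set C := col_base A; set F := row_base A => uC uF.
have eA : A = C *m F by rewrite mulmx_base.
rewrite {1 2 3 4}eA => H.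
by rewrite -mulmxA mxtrace_mulC (@cancel_CF _ _ _ C F X uC uF H) mxtrace1.
Qed.

Lemma MP_exists m n (A : 'M[R]_(m, n)) : exists X, is_MP_inverse A X.
Proof.
have uC := CtC_unit _ _ A; have uF := FFt_unit _ _ A.
move: uC uF; set C := col_base A; set F := row_base A => uC uF.
have eA : A = C *m F by rewrite mulmx_base.
rewrite eA; clearbody C F; clear eA.
exists (F^T *m invmx (F *m F^T) *m invmx (C^T *m C) *m C^T).
have AX : C *m F *m (F^T *m invmx (F *m F^T) *m invmx (C^T *m C) *m C^T)
           = C *m invmx (C^T *m C) *m C^T.
  by rewrite -!mulmxA (mulmxA F F^T) (mulmxA (F *m F^T)) mulmxV // mul1mx.
have XA : (F^T *m invmx (F *m F^T) *m invmx (C^T *m C) *m C^T) *m (C *m F)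
           = F^T *m invmx (F *m F^T) *m F.
  by rewrite -!mulmxA (mulmxA C^T C) (mulmxA (invmx (C^T *m C))) mulVmx // mul1mx.
split.
- by rewrite AX -!mulmxA (mulmxA C^T C) (mulmxA (invmx (C^T *m C))) mulVmx // mul1mx.
- by rewrite XA -!mulmxA (mulmxA F F^T) (mulmxA (invmx (F *m F^T))) mulVmx // mul1mx.
- by rewrite AX !trmx_mul trmxK trmx_inv trmx_mul trmxK mulmxA.
- by rewrite XA !trmx_mul trmxK trmx_inv trmx_mul trmxK mulmxA.
Qed.


Lemma sqnorm_ge0 n (x : 'rV[R]_n) : 0 <= sqnorm_row x.
Proof. by apply: sumr_ge0 => j _; rewrite sqr_ge0. Qed.

Lemma sqnorm_eq0 n (x : 'rV[R]_n) : sqnorm_row x = 0 -> x = 0.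
Proof.
move=> /eqP; rewrite /sqnorm_row psumr_eq0 => [H|j _]; last by rewrite sqr_ge0.
apply/matrixP=> a b; rewrite (ord1 a) mxE.
by move/allP: H => /(_ b (mem_index_enum _)) /implyP /(_ isT); rewrite sqrf_eq0 => /eqP.
Qed.

End Aux.

Section Main.
Variables (R : realType) (m s N : nat) (G : 'I_N -> 'M[R]_(m, s)).
Hypothesis hG : forall v : 'cV[R]_m, in_colspace (Gcat G) v.

Lemma vzero (v : 'cV[R]_m) : (forall j, v^T *m G j = 0) -> v = 0.
Proof.
move=> H.
have H1 : v^T *m Gcat G = 0.
  rewrite /Gcat mul_mxrow (eq_mxrow (B_ := fun j => (0 : 'M[R]_(1, s)))) //.
  by rewrite mxrow0.
have [u' eu] := hG v.
have H2 : v^T *m (v^T)^T = 0 by rewrite trmxK {2}eu mulmxA H1 mul0mx.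
by apply: trmx_inj; rewrite trmx0; apply: sqsum_eq0.
Qed.


Lemma sqnorm0 n : sqnorm_row (0 : 'rV[R]_n) = 0.
Proof. by rewrite /sqnorm_row big1 // => j _; rewrite mxE expr0n. Qed.

Lemma A_neq0 (P : 'M[R]_m) (S : {set 'I_N}) v i :
  P^T = P -> P *m P = P -> (forall j, j \in S -> P *m G j = 0) ->
  in_colspace P v -> v != 0 ->
  (forall j, j \notin S -> sqnorm_row (v^T *m G j) <= sqnorm_row (v^T *m G i)) ->
  P *m G i != 0.
Proof.
move=> sP iP hS [u eu] nv hmax; apply/eqP => A0.
have vP : v^T *m P = v^T.
  by rewrite -{1}sP -trmx_mul eu mulmxA iP.
have hvj : forall j, j \in S -> v^T *m G j = 0.
  by move=> j jS; rewrite -vP -mulmxA hS // mulmx0.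
have hvi : v^T *m G i = 0 by rewrite -vP -mulmxA A0 mulmx0.
move/negP: nv; apply; apply/eqP/vzero => j.
case: (boolP (j \in S)) => [/hvj //| jS].
apply: sqnorm_eq0; apply/eqP; rewrite eq_le sqnorm_ge0 andbT.
by have := hmax j jS; rewrite hvi sqnorm0.
Qed.

Lemma step_inv (P : 'M[R]_m) (S : {set 'I_N}) i (X : 'M[R]_(s, m)) (Y : 'I_N -> 'M[R]_(s, m)) k :
  P^T = P -> P *m P = P -> (forall j, j \in S -> P *m G j = 0) ->
  1%:M - P = \sum_(j in S) G j *m Y j -> \tr P = k%:R -> i \notin S ->
  P *m G i != 0 -> P *m G i *m X *m (P *m G i) = P *m G i ->
  (P *m G i *m X)^T = P *m G i *m X ->
  [/\ (P - P *m G i *m X)^T = P - P *m G i *m X,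
      (P - P *m G i *m X) *m (P - P *m G i *m X) = P - P *m G i *m X,
      (forall j, j \in i |: S -> (P - P *m G i *m X) *m G j = 0),
      exists Y', 1%:M - (P - P *m G i *m X) = \sum_(j in i |: S) G j *m Y' j &
      exists2 k', \tr (P - P *m G i *m X) = k'%:R & (k' < k)%N ].
Proof.
move=> sP iP hS hY hk iS nA hAXA sQ.
set A := P *m G i in nA hAXA sQ *.
set Q := A *m X in sQ *.
have PA : P *m A = A by rewrite /A mulmxA iP.
have PQ : P *m Q = Q by rewrite /Q mulmxA PA.
have QP : Q *m P = Q by apply: trmx_inj; rewrite trmx_mul sP sQ PQ.
have QQ : Q *m Q = Q by rewrite /Q mulmxA hAXA.
have sP' : (P - Q)^T = P - Q by rewrite linearB /= sP sQ.
have iP' : (P - Q) *m (P - Q) = P - Q.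
  by rewrite mulmxBl !mulmxBr iP PQ QP QQ subrr subr0.
split => //.
- move=> j /setU1P [-> | jS].
    by rewrite mulmxBl -/A -QP -mulmxA -/A /Q hAXA subrr.
  by rewrite mulmxBl -QP -!mulmxA hS // !mulmx0 subrr.
- exists (fun j => if j == i then X else Y j - Y j *m (G i *m X)).
  rewrite big_setU1 //= eqxx.
  rewrite (eq_bigr (fun j => G j *m Y j - G j *m Y j *m (G i *m X))); last first.
    move=> j jS; have -> : (j == i) = false.
      by apply/negP => /eqP ej; move: iS; rewrite -ej jS.
    by rewrite mulmxBr !mulmxA.
  rewrite sumrB -mulmx_suml -hY mulmxBl mul1mx /Q /A !mulmxA.
  exact: zid.
- have trQ := @tr_AX _ _ _ _ _ hAXA.
  have hge : 0 <= \tr (P - Q) by rewrite -{1}iP' -{2}sP'; apply: tr_self_ge0.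
  move: hge; rewrite linearB /= hk -/Q trQ subr_ge0 ler_nat => hle.
  have r0 : (0 < \rank A)%N by rewrite lt0n mxrank_eq0.
  exists (k - \rank A)%N; first by rewrite natrB.
  by rewrite ltn_subrL r0 /=; apply: leq_trans hle.
Qed.


Lemma proj0 (P : 'M[R]_m) : P^T = P -> P *m P = P -> \tr P = 0 -> P = 0.
Proof. by move=> sP iP h0; apply: tr_self_eq0; rewrite sP iP. Qed.

Lemma self11_ge0 n (x : 'rV[R]_n) : 0 <= (x *m x^T) 0 0.
Proof. by rewrite mxE; apply: sumr_ge0 => j _; rewrite mxE -expr2 sqr_ge0. Qed.

Lemma unit_of (S : {set 'I_N}) (Z : 'I_N -> 'M[R]_(s, m)) :
  1%:M = \sum_(j in S) G j *m Z j -> info_mx G (design_w R S) \in unitmx.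
Proof.
move=> hZ; rewrite -row_free_unit; apply: inj_row_free => u Hu.
have e : (u *m info_mx G (design_w R S) *m u^T) 0 0 =
    \sum_i design_w R S i * ((u *m G i) *m (u *m G i)^T) 0 0.
  rewrite /info_mx mulmx_sumr mulmx_suml summxE; apply: eq_bigr => i _.
  by rewrite -scalemxAr -scalemxAl mxE trmx_mul !mulmxA.
have key : forall j, j \in S -> u *m G j = 0.
  move: e; rewrite Hu mul0mx mxE => /esym /eqP; rewrite psumr_eq0; last first.
    move=> i _; apply: mulr_ge0; last exact: self11_ge0.
    rewrite /design_w; case: ifP => // _; by rewrite invr_ge0 ler0n.
  move=> /allP H j jS; have := H j (mem_index_enum _); rewrite implyTb mulf_eq0.
  have wpos : design_w R S j != 0.
    rewrite /design_w jS invr_eq0 pnatr_eq0 -lt0n; apply/card_gt0P; by exists j.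
  rewrite (negbTE wpos) /= => /eqP h; apply: sqsum_eq0.
  by rewrite [LHS]mx11_scalar h; apply/matrixP => a b; rewrite !mxE; case: (_ == _).
rewrite -[u]mulmx1 hZ mulmx_sumr big1 // => j jS.
by rewrite mulmxA key // mul0mx.
Qed.


Lemma progress (S : {set 'I_N}) (P : 'M[R]_m) :
  P^T = P -> P *m P = P -> (forall j, j \in S -> P *m G j = 0) -> P != 0 ->
  exists st', mkym_step G (MkState S P false) st'.
Proof.
move=> sP iP hS nP.
have [j0 hj] : exists j, col j P != 0.
  case: (pickP (fun j => col j P != 0)) => [j hj | H]; first by exists j.
  move/negP: nP; case; apply/eqP/matrixP => a b.
  have := H b; rewrite /= => /negbFE /eqP /matrixP /(_ a 0).
  by rewrite !mxE.
set v := col j0 P.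
have hv : in_colspace P v by exists (delta_mx j0 0); rewrite /v colE.
have vP : v^T *m P = v^T.
  by rewrite -{1}sP -trmx_mul /v colE mulmxA iP.
have [i0 i0S] : exists i, i \notin S.
  case: (pickP (fun i => i \notin S)) => [i hi | H]; first by exists i.
  move/negP: hj; case; apply/eqP/vzero => j.
  by rewrite -vP -mulmxA hS ?mulmx0 //; have := H j; rewrite /= => /negbFE.
case: (@arg_maxP _ _ _ i0 (fun i => i \notin S) (fun i => sqnorm_row (v^T *m G i)) i0S) => i iS hmax.
case E: (#|i |: S| == m).
  exists (MkState (i |: S) P true); split => //; exists v, i; split => //=.
  by rewrite E.
have [X hX] := @MP_exists _ _ _ (P *m G i).
exists (MkState (i |: S) (P - P *m G i *m X) (\tr (P - P *m G i *m X) < 2^-1)).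
split => //; exists v, i; split => //=.
by rewrite E; exists X; split.
Qed.


Lemma half_lt1 : (2^-1 : R) < 1.
Proof. rewrite invf_lt1 ?ltr0n //; lra. Qed.

Lemma nat_lt_half k : (k%:R : R) < 2^-1 -> k = 0%N.
Proof.
case: k => // k H; exfalso; have := lt_trans H half_lt1.
have : (1 : R) <= k.+1%:R by rewrite ler1n.
move=> ? ?; lra.
Qed.

Definition Inv (st : mkym_state R m N) : Prop :=
  if st_done st then
    (#|st_S st| <= m)%N /\
    exists Z : 'I_N -> 'M[R]_(s, m), 1%:M = \sum_(j in st_S st) G j *m Z j
  else
    [/\ (st_P st)^T = st_P st, st_P st *m st_P st = st_P st,
        (forall j, j \in st_S st -> st_P st *m G j = 0),
        exists Y : 'I_N -> 'M[R]_(s, m), 1%:M - st_P st = \sum_(j in st_S st) G j *m Y j &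
        exists k, [/\ \tr (st_P st) = k%:R, (k + #|st_S st| <= m)%N & (0 < k)%N]].

Lemma Inv_init : (0 < m)%N -> Inv (mkym_init R m N).
Proof.
move=> m0; rewrite /Inv /=; split.
- exact: trmx1.
- exact: mulmx1.
- by move=> j; rewrite in_set0.
- by exists (fun _ => 0); rewrite subrr big_set0.
- by exists m; rewrite mxtrace1 cards0 addn0.
Qed.

Lemma Inv_step st st' : Inv st -> mkym_step G st st' -> Inv st'.
Proof.
case: st => S P d /= Hinv [/= hd [v [i [hv nv iS hmax hst]]]].
move: Hinv; rewrite /Inv /= hd => -[sP iP hS [Y hY] [k [hk hkm k0]]].
have nA := A_neq0 _ _ _ _ sP iP hS hv nv hmax.
have cS : #|i |: S| = #|S|.+1 by rewrite cardsU1 iS.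
move: hst => /=; case E: (#|i |: S| == m) => hst.
  subst st' => /=; split; first by rewrite (eqP E).
  have [X [h1 h2 h3 h4]] := @MP_exists _ _ _ (P *m G i).
  have [sP' iP' _ [Y' hY'] [k' hk' lt]] := step_inv _ _ _ _ _ _ sP iP hS hY hk iS nA h1 h3.
  have k'0 : k' = 0%N. move: (eqP E) hkm lt; rewrite cS. set c := #|S|. move=> a b e. lia.
  move: hk'; rewrite k'0 => /(proj0 _ sP' iP') P0.
  by exists Y'; rewrite -hY' P0 subr0.
case: hst => X [[h1 h2 h3 h4] ->]; rewrite /Inv /=.
have [sP' iP' hS' [Y' hY'] [k' hk' lt]] := step_inv _ _ _ _ _ _ sP iP hS hY hk iS nA h1 h3.
case D: (\tr (P - P *m G i *m X) < 2^-1).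
  move: D; rewrite hk' => /nat_lt_half k'0.
  split; first by rewrite cS; move: hkm k0 lt; set c := #|S|; lia.
  move: hk'; rewrite k'0 => /(proj0 _ sP' iP') P0.
  by exists Y'; rewrite -hY' P0 subr0.
split => //; first by exists Y'.
exists k'; split => //; first by rewrite cS; move: hkm k0 lt; set c := #|S|; lia.
rewrite lt0n; apply/negP => /eqP k'0; move: D; by rewrite hk' k'0 invr_gt0 ltr0n.
Qed.

End Main.

Lemma acc_all (R : realType) (m s N : nat) (G : 'I_N -> 'M[R]_(m, s)) n :
  forall st : mkym_state R m N, (N - #|st_S st| < n)%N ->
  Acc (fun st' st => mkym_step G st st') st.
Proof.
elim: n => [|n IH] st; first by [].
move=> hn; constructor => st' [hd [v [i [_ _ iS _ hst]]]].
have eS : st_S st' = i |: st_S st.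
  move: hst => /=; case: ifP => _; first by move=> ->.
  by case=> X [_ ->].
apply: IH; rewrite eS.
have c1 := cardsU1 i (st_S st); rewrite iS /= in c1.
have c2 := max_card (i |: st_S st); rewrite card_ord in c2.
move: hn c1 c2; set a := #|i |: st_S st|; set b := #|st_S st|.
clearbody a b; move=> h1 h2 h3; clear -h1 h2 h3; lia.
Qed.
Theorem theorem2 (R : realType) (m s N : nat) (G : 'I_N -> 'M[R]_(m, s)) :
  (0 < m)%N ->
  (forall v : 'cV[R]_m, in_colspace (Gcat G) v) ->
  Acc (fun st' st => mkym_step G st st') (mkym_init R m N) /\
  (forall st : mkym_state R m N, mkym_reachable G st ->
    [/\ (#|st_S st| <= m)%N,
        (st_done st = false -> exists st', mkym_step G st st') &
        (st_done st = true -> info_mx G (design_w R (st_S st)) \in unitmx)]).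
Proof.
move=> m0 hG; split.
  by apply: (@acc_all R m s N G (N - #|st_S (mkym_init R m N)|).+1).
move=> st Hr.
have Hi : @Inv R m s N G st.
  elim: Hr => [|st0 st1 _ IH hs]; first exact: (@Inv_init R m s N G m0).
  exact: (@Inv_step R m s N G hG _ _ IH hs).
move: Hi; rewrite /Inv; clear Hr; case: st => S P [] /= H.
  case: H => hm [Z hZ]; split => // _; exact: (@unit_of R m s N G _ _ hZ).
case: H => sP iP hS _ [k [hk hkm k0]]; split => //.
  by move: hkm; set c := #|S|; clearbody c; move=> h; clear -h; lia.
move=> _; apply: (@progress R m s N G hG _ _ sP iP hS); apply/eqP => P0.
by move: hk; rewrite P0 linear0 => /eqP; rewrite eq_sym pnatr_eq0 => /eqP k00; rewrite k00 in k0.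
Qed.
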